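(* Let $\mu_1\in(0,1)$ and $0<\varepsilon_2\le\frac12\mu_1$. Let $h(\mu_1,\varepsilon_2)=\ln\frac{(1-\mu_1+\varepsilon_2)\mu_1}{(1-\mu_1)(\mu_1-\varepsilon_2)}$ and $H=\frac{1}{(\mu_1-\varepsilon_2)(1-\mu_1+\varepsilon_2)h(\mu_1,\varepsilon_2)^2}$. Then \[ H\le\frac{2\dot\mu_1}{\varepsilon_2^2}+\frac{2}{\varepsilon_2},\qquad\text{where }\dot\mu_1=\mu_1(1-\mu_1). \] *)

(* Defs.v *)
From Stdlib Require Import Reals.
Open Scope R_scope.

Definition hfun (mu1 eps2 : R) : R :=
  ln (((1 - mu1 + eps2) * mu1) / ((1 - mu1) * (mu1 - eps2))).

Definition Hfun (mu1 eps2 : R) : R :=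
  1 / ((mu1 - eps2) * (1 - mu1 + eps2) * (hfun mu1 eps2) ^ 2).

Definition mudot (mu1 : R) : R := mu1 * (1 - mu1).

(* Main.v *)
Require Import Defs.
From Stdlib Require Import Reals Lra.
Open Scope R_scope.

Lemma ln_lb (x : R) : 0 < x -> 1 - / x <= ln x.
Proof.
  intros Hx.
  pose proof (exp_ineq1_le (ln (/ x))) as H.
  rewrite exp_ln in H by (apply Rinv_0_lt_compat; lra).
  rewrite ln_Rinv in H by lra. lra.
Qed.

Theorem lemma15 (mu1 eps2 : R) :
  0 < mu1 < 1 -> 0 < eps2 <= mu1 / 2 ->
  Hfun mu1 eps2 <= 2 * mudot mu1 / eps2 ^ 2 + 2 / eps2.
Proof.
  intros [H0 H1] [E0 E1].
  set (a := mu1 - eps2). set (b := 1 - mu1 + eps2).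
  assert (Ha : mu1 / 2 <= a) by (unfold a; lra).
  assert (Hb : 0 < b) by (unfold b; lra).
  assert (Hq : 0 < 1 - mu1) by lra.
  assert (Hap : 0 < a) by lra.
  assert (Hh : eps2 / mu1 + eps2 / b <= hfun mu1 eps2).
  { unfold hfun.
    replace ((1 - mu1 + eps2) * mu1 / ((1 - mu1) * (mu1 - eps2)))
      with ((b / (1 - mu1)) * (mu1 / a)) by (unfold a, b; field; lra).
    rewrite ln_mult by (apply Rdiv_lt_0_compat; lra).
    pose proof (ln_lb (b / (1 - mu1)) ltac:(apply Rdiv_lt_0_compat; lra)).
    pose proof (ln_lb (mu1 / a) ltac:(apply Rdiv_lt_0_compat; lra)).
    replace (1 - / (b / (1 - mu1))) with (eps2 / b) in * by (unfold b; field; lra).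
    replace (1 - / (mu1 / a)) with (eps2 / mu1) in * by (unfold a; field; lra).
    lra. }
  set (h := hfun mu1 eps2) in *.
  set (L := eps2 / mu1 + eps2 / b) in *.
  assert (HL : 0 < L).
  { unfold L. assert (0 < eps2 / mu1) by (apply Rdiv_lt_0_compat; lra).
    assert (0 < eps2 / b) by (apply Rdiv_lt_0_compat; lra). lra. }
  unfold Hfun; fold h; fold a b.
  apply Rle_trans with (1 / (a * b * L ^ 2)).
  { apply Rmult_le_compat_l; [lra|]. apply Rinv_le_contravar.
    - apply Rmult_lt_0_compat; [apply Rmult_lt_0_compat; lra| apply pow_lt; lra].
    - apply Rmult_le_compat_l; [apply Rmult_le_pos; lra|].
      simpl. rewrite !Rmult_1_r. apply Rmult_le_compat; lra. }
  assert (HLe : L = eps2 * (1 + eps2) / (mu1 * b)) by (unfold L, b; field; lra).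
  rewrite HLe. unfold mudot.
  replace (1 / (a * b * (eps2 * (1 + eps2) / (mu1 * b)) ^ 2))
    with ((mu1 ^ 2 * b / (a * (1 + eps2) ^ 2)) / eps2 ^ 2) by (field; repeat split; lra).
  replace (2 * (mu1 * (1 - mu1)) / eps2 ^ 2 + 2 / eps2)
    with ((2 * (mu1 * (1 - mu1)) + 2 * eps2) / eps2 ^ 2) by (field; lra).
  apply Rmult_le_compat_r; [apply Rlt_le, Rinv_0_lt_compat, pow_lt; lra|].
  apply Rle_trans with (2 * mu1 * b / (1 + eps2) ^ 2).
  { apply Rmult_le_reg_r with (a * (1 + eps2) ^ 2).
    - apply Rmult_lt_0_compat; [lra| apply pow_lt; lra].
    - unfold Rdiv. field_simplify; [|lra|lra].
      assert (0 < (1+eps2)^2) by (apply pow_lt; lra).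
      assert (0 <= mu1 * b * (1+eps2)^2 * (a - mu1/2)).
      { repeat apply Rmult_le_pos; lra. }
      nra. }
  apply Rmult_le_reg_r with ((1 + eps2) ^ 2); [apply pow_lt; lra|].
  unfold Rdiv. rewrite Rmult_assoc, Rinv_l by (apply pow_nonzero; lra).
  unfold b. simpl. assert (0 <= mu1 * (1 - mu1)) by nra. assert (0 <= (2 * (mu1 * (1 - mu1)) + 2 * eps2) * (2*eps2 + eps2*eps2)) by (apply Rmult_le_pos; nra). nra.
Qed.
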